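(* Let $F$ be a field, $n\ge1$, and $a\in\mathrm{M}_n(F)$. Then: (i) there exists $g\in\mathrm{GL}_n(F)$ with (1) $gag^{-1}={}^{\top}a$ and (2) ${}^{\top}g=g$; (ii) if the minimal polynomial and the characteristic polynomial of $a$ coincide (equivalently, the $F[X]$-module $V_a$ is cyclic), then every $g\in\mathrm{GL}_n(F)$ satisfying (1) also satisfies (2); (iii) if the minimal and characteristic polynomials of $a$ differ (equivalently, $V_a$ is not cyclic), then there exists $g\in\mathrm{GL}_n(F)$ satisfying (1) but not (2).
   Context: ${}^{\top}$ denotes matrix transpose. $V_a$ denotes $V=F^n$ (column vectors) with the $F[X]$-module structure $f(X)v=f(a)v$. *)

(* Defs.v *)
From HB Require Import structures.
From mathcomp Require Import all_boot all_order all_algebra.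
Set Implicit Arguments. Unset Strict Implicit. Unset Printing Implicit Defensive.
Import GRing.Theory.
Local Open Scope ring_scope.

(* Main.v *)
Require Import Defs.
From HB Require Import structures.
From mathcomp Require Import all_boot all_order all_algebra.
From mathcomp Require Import fingroup perm.
From Stdlib Require Import Classical.
From mathcomp Require Import zify.
Import GRing.Theory.
Local Open Scope ring_scope.

Section PolyAux.
Context {F : fieldType}.
Implicit Types p q r s t g : {poly F}.

Lemma irr_factor s : (1 < size s)%N -> exists r, irreducible_poly r /\ r %| s.
Proof.
elim: {s}(size s) {-2}s (leqnn (size s)) => [|k IH] s Hs Hs1.
  by move: Hs; rewrite leqn0 => /eqP H; rewrite H in Hs1.
have [Hirr|Hn] := classic (irreducible_poly s).
  by exists s; split => //; rewrite dvdpp.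
have [q Hq] : exists q, ~ (size q != 1%N -> q %| s -> q %= s).
  apply: not_all_ex_not => H; apply: Hn; split => //.
have [Hq1 Hqs Hqn] : [/\ size q != 1%N, q %| s & ~~ (q %= s)].
  case: (size q != 1%N) Hq => //; last by case; case.
  case: (q %| s) => //; last by case.
  by case: (q %= s).
have s0 : s != 0 by rewrite -size_poly_eq0; case: (size s) Hs1.
have q0 : q != 0 by apply: contraNneq s0 => q0; move: Hqs; rewrite q0 dvd0p.
have Hqle := dvdp_leq s0 Hqs.
have Hqlt : (size q < size s)%N.
  by rewrite ltn_neqAle Hqle andbT (dvdp_size_eqp Hqs).
have Hq1' : (1 < size q)%N.
  by rewrite ltn_neqAle eq_sym Hq1 lt0n size_poly_eq0 q0.
have [r [Hr Hrq]] := IH q (leq_trans Hqlt Hs) Hq1'.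
by exists r; split => //; apply: dvdp_trans Hrq Hqs.
Qed.

Lemma pow_split s r : s != 0 -> (1 < size r)%N ->
  exists j t, s = r ^+ j * t /\ ~~ (r %| t).
Proof.
move=> + Hr; elim: {s}(size s) {-2}s (leqnn (size s)) => [|k IH] s Hs s0.
  by move: Hs; rewrite leqn0 size_poly_eq0 (negPf s0).
have [Hrs|Hrs] := boolP (r %| s); last by exists 0%N, s; rewrite expr0 mul1r.
have r0 : r != 0 by rewrite -size_poly_eq0; case: (size r) Hr.
set s' := s %/ r.
have Hss : s = r * s' by rewrite mulrC divpK.
have s'0 : s' != 0 by apply: contraNneq s0 => H; rewrite Hss H mulr0.
have Hs' : (size s' <= k)%N.
  move: Hs; rewrite Hss size_mul // => H; rewrite -ltnS (leq_trans _ H) //.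
  by case: (size r) Hr => // -[|u] // _; rewrite addSn /= ltnS leq_addl.
have [j [t [Ht Hrt]]] := IH s' Hs' s'0.
by exists j.+1, t; rewrite Hss Ht exprS mulrA.
Qed.

Lemma irr_coprime r t : irreducible_poly r -> ~~ (r %| t) -> coprimep r t.
Proof.
case=> Hr1 Hr Hrt; rewrite /coprimep; apply/negPn/negP => Hg.
have := Hr _ Hg (dvdp_gcdl r t) => Heq.
have H1 : r %| gcdp r t by rewrite (eqp_dvdr _ Heq) dvdpp.
by move: Hrt; rewrite (dvdp_trans H1 (dvdp_gcdr r t)).
Qed.

Lemma dvd_irr_pow r g j : irreducible_poly r -> g %| r ^+ j ->
  exists2 i, (i <= j)%N & g %= r ^+ i.
Proof.
move=> Hr; have r0 : r != 0 by rewrite -size_poly_eq0; case: Hr; case: (size r).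
elim: j g => [|j IH] g Hg.
  by exists 0%N => //; move: Hg; rewrite expr0 dvdp1 -dvdp1 => H; rewrite /eqp H dvd1p.
have [Hrg|Hrg] := boolP (r %| g).
  have Hgg : g = r * (g %/ r) by rewrite mulrC divpK.
  move: Hg; rewrite Hgg exprS dvdp_mul2l // => /IH [i Hi Heq].
  by exists i.+1 => //; rewrite exprS eqp_mul2l.
have Hc : coprimep g r by rewrite coprimep_sym irr_coprime.
move: Hg; rewrite exprS Gauss_dvdpr // => /IH [i Hi Heq].
by exists i => //; apply: leqW.
Qed.

End PolyAux.
Arguments irr_factor {F s}.
Arguments pow_split {F s r}.
Arguments irr_coprime {F r t}.
Arguments dvd_irr_pow {F r g j}.

Section Ann.
Variables (F : fieldType) (n : nat) (a : 'M[F]_n.+1).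
Local Notation hv := (horner_mx a).
Implicit Types p q r s t x y : {poly F}.
Implicit Types (u v w : 'rV[F]_n.+1).

Lemma hvM x y : hv (x * y) = hv x *m hv y.
Proof. by rewrite rmorphM mulmxE. Qed.

Lemma annM v x y : v *m hv x = 0 -> v *m hv (x * y) = 0.
Proof. by move=> H; rewrite hvM mulmxA H mul0mx. Qed.

Lemma annMl v x y : v *m hv y = 0 -> v *m hv (x * y) = 0.
Proof. by move=> H; rewrite mulrC annM. Qed.

Lemma anndvd {v x y} : v *m hv x = 0 -> x %| y -> v *m hv y = 0.
Proof. by move=> H /divpK <-; apply: annMl. Qed.

Lemma anneqp {v x y} : x %= y -> v *m hv x = 0 -> v *m hv y = 0.
Proof. by case/andP=> H _ Hx; apply: anndvd Hx H. Qed.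

Lemma annD {v x y} : v *m hv x = 0 -> v *m hv y = 0 -> v *m hv (x + y) = 0.
Proof. by move=> Hx Hy; rewrite rmorphD mulmxDr Hx Hy addr0. Qed.

Lemma anngcd {v x y} : v *m hv x = 0 -> v *m hv y = 0 -> v *m hv (gcdp x y) = 0.
Proof.
move=> Hx Hy; have [e He] := Bezoutp x y.
by apply: anneqp He _; apply: annD; apply: annMl.
Qed.

Lemma anncop {v x y} : coprimep x y -> v *m hv x = 0 -> v *m hv y = 0 -> v = 0.
Proof.
move=> /Bezout_coprimepP [e He] Hx Hy.
have : v *m hv 1 = 0 by apply: anneqp He _; apply: annD; apply: annMl.
by rewrite rmorph1 mulmx1.
Qed.

Lemma split_ann {u w x y q} : coprimep x y -> u *m hv x = 0 -> w *m hv y = 0 ->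
  (u + w) *m hv q = 0 -> u *m hv q = 0.
Proof.
move=> Hc Hu Hw Huw.
have Hz : u *m hv q = - (w *m hv q).
  by apply/eqP; rewrite -subr_eq0 opprK -mulmxDl Huw.
apply: (anncop Hc).
  by rewrite -mulmxA -hvM mulrC annM.
by rewrite Hz mulNmx -mulmxA -hvM mulrC annM ?oppr0.
Qed.

Lemma max_vector_gen s : s %| mxminpoly a ->
  exists v, v *m hv s = 0 /\ forall q, v *m hv q = 0 -> s %| q.
Proof.
set p := mxminpoly a.
have p0 : p != 0 by rewrite -size_poly_eq0 size_mxminpoly.
elim: {s}(size s) {-2}s (leqnn (size s)) => [|k IH] s Hs Hsp.
  move: Hs; rewrite leqn0 size_poly_eq0 => /eqP s0.
  by move: Hsp; rewrite s0 dvd0p (negPf p0).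
have s0 : s != 0 by apply/eqP => s0; move: Hsp p0; rewrite s0 dvd0p => ->.
have [Hs1|Hs1] := leqP (size s) 1.
  exists 0; split; first by rewrite mul0mx.
  move=> q _; have : size s = 1%N by apply/eqP; rewrite eqn_leq Hs1 lt0n size_poly_eq0 s0.
  by move=> H; apply: dvdp_trans (dvd1p q); rewrite dvdp1 H.
have [r [Hr Hrs]] := irr_factor Hs1.
have Hr1 : (1 < size r)%N by case: Hr.
have r0 : r != 0 by rewrite -size_poly_eq0; case: (size r) Hr1.
have [j [t [Hst Hrt]]] := pow_split s0 Hr1.
have t0 : t != 0 by apply: contraNneq s0 => t0; rewrite Hst t0 mulr0.
have j0 : (0 < j)%N.
  by case: j Hst => // Hst; move: Hrt; rewrite Hst expr0 mul1r in Hrs; rewrite Hrs.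
have Hts : t %| s by rewrite Hst dvdp_mull.
have Hjs : r ^+ j %| s by rewrite Hst dvdp_mulr.
have Htsize : (size t <= k)%N.
  rewrite -ltnS (leq_trans _ Hs) // ltn_neqAle (dvdp_leq s0 Hts) andbT.
  rewrite (dvdp_size_eqp Hts); apply/negP => /andP [_ Hst'].
  by move: Hrt; rewrite (dvdp_trans Hrs Hst').
have [vt [Hvt1 Hvt2]] := IH t Htsize (dvdp_trans Hts Hsp).
have Hrp : r %| p := dvdp_trans Hrs Hsp.
set p1 := p %/ r.
have Hp1 : p = r * p1 by rewrite mulrC divpK.
have hp1 : hv p1 != 0.
  apply/negP => /eqP /mxminpoly_min Hd.
  have p10 : p1 != 0 by apply: contraNneq p0 => H; rewrite Hp1 H mulr0.
  have := dvdp_leq p10 Hd; rewrite -/p Hp1 size_mul //.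
  have : size p1 != 0%N by rewrite size_poly_eq0.
  move: Hr1; move: (size r) (size p1) => x y; clear. lia.
have [y Hy] : exists y : 'rV_n.+1, y *m hv p1 != 0.
  apply: not_all_not_ex => H; move/negP: hp1; apply.
  apply/eqP/row_matrixP => i; rewrite row0 rowE; apply/eqP/negPn/negP; exact: H.
set c := p %/ r ^+ j.
have Hpc : p = r ^+ j * c by rewrite mulrC divpK // (dvdp_trans Hjs Hsp).
have Hp1c : p1 = r ^+ j.-1 * c.
  apply: (mulfI r0); rewrite -Hp1 Hpc mulrA -exprS prednK //.
set vr := y *m hv c.
have Hvr1 : vr *m hv (r ^+ j) = 0.
  by rewrite -mulmxA -hvM mulrC -Hpc mx_root_minpoly mulmx0.
have Hvr2 : forall q, vr *m hv q = 0 -> r ^+ j %| q.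
  move=> q Hq; have Hg := anngcd Hq Hvr1.
  have [i Hi Hgi] := dvd_irr_pow Hr (dvdp_gcdr q (r ^+ j)).
  have Hri := anneqp Hgi Hg.
  have [Hij|Hij] := ltnP i j.
    have : vr *m hv (r ^+ j.-1) = 0.
      by apply: anndvd Hri _; rewrite -(subnK (_ : i <= j.-1)%N) ?exprD ?dvdp_mull // -ltnS prednK.
    by rewrite -mulmxA -hvM mulrC -Hp1c => /eqP; rewrite (negPf Hy).
  have Eij : i = j by apply/eqP; rewrite eqn_leq Hi Hij.
  rewrite Eij in Hgi; move: Hgi => /andP [_ H]; apply: dvdp_trans H (dvdp_gcdl _ _).
have Hcop : coprimep t (r ^+ j) by rewrite coprimep_sym coprimep_expl // irr_coprime.
exists (vt + vr); split.
  rewrite mulmxDl; apply/eqP; rewrite addr_eq0; apply/eqP.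
  by rewrite (anndvd Hvt1 Hts) (anndvd Hvr1 Hjs) oppr0.
move=> q Hq.
have Ht := Hvt2 _ (split_ann Hcop Hvt1 Hvr1 Hq).
have Hr' : vr *m hv q = 0.
  by apply: (split_ann _ Hvr1 Hvt1); rewrite 1?addrC // coprimep_sym.
by rewrite Hst mulrC Gauss_dvdp // Ht Hvr2.
Qed.

End Ann.

Definition krylov {F : fieldType} {k : nat} (u : 'rV[F]_k) (b : 'M[F]_k) (d : nat)
  : 'M[F]_(d, k) := \matrix_(i < d) (u *m b ^+ i).

Section Kry.
Variables (F : fieldType) (n : nat).
Implicit Types (b : 'M[F]_n.+1) (u v : 'rV[F]_n.+1) (p q : {poly F}).

Lemma tr_exp b k : (b ^+ k)^T = b^T ^+ k.
Proof.
elim: k => [|k IH]; first by rewrite !expr0 trmx1.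
by rewrite exprS -mulmxE trmx_mul IH mulmxE -exprSr.
Qed.

Lemma horner_tr b p : horner_mx b^T p = (horner_mx b p)^T.
Proof.
elim/poly_ind: p => [|p c IH]; first by rewrite !rmorph0 trmx0.
rewrite !rmorphD !rmorphM /= !horner_mx_X !horner_mx_C IH -!mulmxE linearD /=.
by rewrite trmx_mul tr_scalar_mx -!trmx_mul (comm_mx_horner p (comm_mx_refl b)).
Qed.

Lemma mxminpoly_tr b : mxminpoly b^T = mxminpoly b.
Proof.
apply/eqP; rewrite -eqp_monic ?mxminpoly_monic // /eqp.
apply/andP; split; apply: mxminpoly_min;
  first [by rewrite horner_tr mx_root_minpoly trmx0
        | by apply: trmx_inj; rewrite trmx0 -horner_tr ?trmxK mx_root_minpoly].
Qed.

Lemma KH b u d (c : 'rV_d) : c *m krylov u b d = u *m horner_mx b (rVpoly c).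
Proof.
rewrite mulmx_sum_row [rVpoly c]poly_def rmorph_sum mulmx_sumr.
apply: eq_bigr => i _; rewrite valK /= linearZ /= rmorphXn /= horner_mx_X rowK.
by rewrite -scalemxAr.
Qed.

Lemma K_sub b u d p q : horner_mx b p = 0 -> size p = d.+1 ->
  (u *m horner_mx b q <= krylov u b d)%MS.
Proof.
move=> Hp Hs.
have p0 : p != 0 by rewrite -size_poly_eq0 Hs.
have -> : horner_mx b q = horner_mx b (q %% p).
  by rewrite {1}(divp_eq q p) rmorphD rmorphM /= Hp mulr0 add0r.
have Hsz : (size (q %% p)%R <= d)%N by rewrite -ltnS -Hs ltn_modp.
by rewrite -(poly_rV_K Hsz) -KH submxMl.
Qed.

Lemma K_stable b u d p : horner_mx b p = 0 -> size p = d.+1 ->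
  (krylov u b d *m b <= krylov u b d)%MS.
Proof.
move=> Hp Hs; apply/row_subP => i; rewrite row_mul rowK -mulmxA mulmxE -exprSr.
have -> : b ^+ i.+1 = horner_mx b ('X ^+ i.+1) by rewrite rmorphXn /= horner_mx_X.
exact: K_sub Hp Hs.
Qed.

Lemma K_free b u d p : size p = d.+1 ->
  (forall q, u *m horner_mx b q = 0 -> p %| q) -> row_free (krylov u b d).
Proof.
move=> Hs Hu; apply: inj_row_free => c; rewrite KH => /Hu Hd.
have p0 : p != 0 by rewrite -size_poly_eq0 Hs.
have : rVpoly c = 0.
  apply/eqP; apply: contraT => Hc; have := dvdp_leq Hc Hd.
  have Hsz : (size (rVpoly c) <= d)%N by apply: size_poly.
  by rewrite Hs => H; move: (leq_trans H Hsz); rewrite ltnn.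
by move=> H; rewrite -[c]rVpolyK H linear0.
Qed.

Lemma max_vector b : exists v, forall q, v *m horner_mx b q = 0 -> mxminpoly b %| q.
Proof. by have [v [_ H]] := @max_vector_gen _ _ b _ (dvdpp (mxminpoly b)); exists v. Qed.

End Kry.
Arguments tr_exp {F n} b k.
Arguments horner_tr {F n} b p.
Arguments mxminpoly_tr {F n} b.
Arguments KH {F n b u d} c.
Arguments K_sub {F n b u d p q}.
Arguments K_stable {F n b u d p}.
Arguments K_free {F n b u d p}.
Arguments max_vector {F n} b.

Lemma entry_sym {F : fieldType} (k m : nat) (X : 'M[F]_(k, m)) (G : 'M_m) i j :
  (X *m G *m X^T) i j = (row i X *m G *m (row j X)^T) 0 0.
Proof.
rewrite !mxE; apply: eq_bigr => l _; rewrite !mxE; congr (_ * _).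
by apply: eq_bigr => l' _; rewrite !mxE.
Qed.

Lemma pow_comm {F : fieldType} (n : nat) (a g : 'M[F]_n.+1) i :
  g *m a = a^T *m g -> a^T ^+ i *m g = g *m a ^+ i.
Proof.
move=> H; elim: i => [|i IH]; first by rewrite !expr0 mul1mx mulmx1.
by rewrite exprS -mulmxE -mulmxA IH mulmxA -H -mulmxA mulmxE -exprS.
Qed.

Lemma part2 {F : fieldType} (n : nat) (a : 'M[F]_n.+1) :
  mxminpoly a = char_poly a -> forall g, g *m a = a^T *m g -> g^T = g.
Proof.
move=> Hmc g Hg.
have [w Hw] := max_vector a^T.
have Hs : size (mxminpoly a^T) = n.+2 by rewrite mxminpoly_tr Hmc size_char_poly.
set Q := krylov w a^T n.+1.
have HQ : Q \in unitmx by rewrite -row_free_unit; apply: K_free Hs Hw.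
have Hent : forall i j, (Q *m g *m Q^T) i j = (w *m g *m a ^+ (i + j) *m w^T) 0 0.
  move=> i j; rewrite entry_sym !rowK trmx_mul tr_exp trmxK.
  by rewrite -!mulmxA (mulmxA _ g) pow_comm // exprD -mulmxE !mulmxA.
have HM : (Q *m g *m Q^T)^T = Q *m g *m Q^T.
  by apply/matrixP => i j; rewrite mxE !Hent addnC.
move: HM; rewrite !trmx_mul trmxK -mulmxA => /(congr1 (mulmx (invmx Q))).
rewrite !mulKmx // => /(congr1 (mulmx ^~ (invmx Q^T))).
by rewrite !mulmxK ?unitmx_tr.
Qed.

Lemma hankel_unit {F : fieldType} d (h : nat -> F) :
  (forall k, (k < d)%N -> h k = (k == d.-1)%:R) ->
  \matrix_(i < d, j < d) h (i + j)%N \in unitmx.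
Proof.
move=> Hh; set H := \matrix_(i, j) _.
pose s : 'S_d := perm (@rev_ord_inj d).
have : col_perm s H \in unitmx.
  rewrite unitmxE det_trig.
    rewrite big1 ?unitr1 // => i _; rewrite !mxE permE /= Hh.
      have -> : (i + (d - i.+1) = d.-1)%N by move: (ltn_ord i); clear; lia.
      by rewrite eqxx.
    by move: (ltn_ord i); clear; lia.
  apply/forallP => i; apply/forallP => j; apply/implyP => Hij.
  rewrite !mxE permE /= Hh.
    have -> : ((i + (d - j.+1))%N == d.-1) = false by apply/negbTE; move: (ltn_ord j) Hij; clear; lia.
    by rewrite eqxx.
  by move: (ltn_ord j) Hij; clear; lia.
by rewrite col_permE unitmx_mul => /andP [].
Qed.

Lemma entry_gen {F : fieldType} (k1 k2 m : nat) (X : 'M[F]_(k1, m)) (G : 'M_m)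
  (Y : 'M_(k2, m)) i j :
  (X *m G *m Y^T) i j = (row i X *m G *m (row j Y)^T) 0 0.
Proof.
rewrite !mxE; apply: eq_bigr => l _; rewrite !mxE; congr (_ * _).
by apply: eq_bigr => l' _; rewrite !mxE.
Qed.

Section Decomp.
Variables (F : fieldType) (n : nat) (a : 'M[F]_n.+1).

Lemma decomp : exists d m (K : 'M_(d, n.+1)) (N : 'M_(m, n.+1)) (C : 'M_d)
  (D : 'M_m) (H : 'M_d),
  [/\ (d + m = n.+1)%N, d = degree_mxminpoly a, row_free (col_mx K N),
      K *m a = C *m K & N *m a = D *m N] /\
  [/\ H \in unitmx, H^T = H, C *m H = H *m C^T &
     ((0 < m)%N -> exists2 Y : 'M_(d, m), Y != 0 & Y *m D = C *m Y)].
Proof.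
set p := mxminpoly a; set d := degree_mxminpoly a.
have Hsp : size p = d.+1 := size_mxminpoly a.
have hp : horner_mx a p = 0 := mx_root_minpoly a.
have d0 : (0 < d)%N := mxminpoly_nonconstant a.
have [v Hv] := max_vector a.
set K := krylov v a d.
have HKf : row_free K := K_free Hsp Hv.
have HKs : (K *m a <= K)%MS := K_stable hp Hsp.
set C := K *m a *m pinvmx K.
have HKC : K *m a = C *m K by rewrite mulmxKpV.
have Hd1 : (d.-1 < d)%N by rewrite ltn_predL.
pose e := (delta_mx 0 (Ordinal Hd1) : 'rV[F]_d).
have HeK : (e <= K^T)%MS by apply: submx_full; rewrite /row_full mxrank_tr (eqP HKf).
pose phi := e *m pinvmx K^T.
have Hphi : phi *m K^T = e := mulmxKpV HeK.
pose Lt := krylov phi a^T d.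
have hpT : horner_mx a^T p = 0 by rewrite horner_tr hp trmx0.
have HLs : (Lt *m a^T <= Lt)%MS := K_stable hpT Hsp.
pose h k := (v *m a ^+ k *m phi^T) 0 0.
have Hent : forall (G : 'M_n.+1) i j k, G = a ^+ k ->
    (K *m G *m Lt^T) i j = h (i + k + j)%N.
  move=> G i j k ->; rewrite entry_gen !rowK trmx_mul tr_exp trmxK /h.
  by rewrite !mulmxA !exprD -!mulmxE !mulmxA.
set H := K *m Lt^T.
have HH : H = \matrix_(i < d, j < d) h (i + j)%N.
  apply/matrixP => i j; rewrite mxE /H -[K in LHS]mulmx1.
  by rewrite (Hent _ i j 0%N) ?expr0 // addn0.
have Ek : K *m phi^T = e^T by rewrite -[K]trmxK -trmx_mul Hphi.
have Hh : forall k, (k < d)%N -> h k = (k == d.-1)%:R.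
  move=> k Hk; have : row (Ordinal Hk) (K *m phi^T) 0 0 = h k by rewrite row_mul rowK.
  rewrite Ek !mxE eqxx /= => <-.
  by [].
have HHu : H \in unitmx by rewrite HH; apply: hankel_unit.
have HHs : H^T = H by rewrite HH; apply/matrixP => i j; rewrite !mxE addnC.
have HCH : C *m H = H *m C^T.
  have E : C *m H = K *m a *m Lt^T by rewrite /H mulmxA -HKC.
  have Es : (K *m a *m Lt^T)^T = K *m a *m Lt^T.
    apply/matrixP => i j; rewrite mxE !(Hent _ _ _ 1%N) ?expr1 //.
    by have -> : (j + 1 + i = i + 1 + j)%N by lia.
  by rewrite -[H in RHS]HHs -trmx_mul E Es.
pose L := Lt^T.
have HrkL : \rank L = d.
  apply/eqP; rewrite eqn_leq rank_leq_col /=.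
  by have := mxrankM_maxr K L; rewrite -/H mxrank_unit.
pose N := row_base (kermx L).
pose m := \rank (kermx L).
have HdK : (d <= n.+1)%N by rewrite -(eqP HKf) rank_leq_col.
have Hm : (d + m = n.+1)%N by rewrite /m mxrank_ker HrkL subnKC.
have HNf : row_free N := row_base_free _.
have HNker : (N <= kermx L)%MS by rewrite eq_row_base.
have HkerN : (kermx L <= N)%MS by rewrite eq_row_base.
have Hkers : (kermx L *m a <= kermx L)%MS.
  apply/sub_kermxP.
  pose C2 := Lt *m a^T *m pinvmx Lt.
  have E2 : Lt *m a^T = C2 *m Lt by rewrite mulmxKpV.
  have E3 : a *m L = L *m C2^T by rewrite /L -[a]trmxK -trmx_mul E2 trmx_mul.
  by rewrite -mulmxA E3 mulmxA mulmx_ker mul0mx.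
have HNs : (N *m a <= N)%MS.
  exact: submx_trans (submx_trans (submxMr a HNker) Hkers) HkerN.
pose D := N *m a *m pinvmx N.
have HND : N *m a = D *m N by rewrite mulmxKpV.
have Hcap : (K :&: N = 0)%MS.
  apply/eqP; rewrite -submx0; apply/rV_subP => x; rewrite sub_capmx.
  case/andP => /submxP [y ->] HxN.
  have Hy : y *m H = 0.
    by rewrite /H mulmxA; apply/sub_kermxP; apply: submx_trans HxN HNker.
  have -> : y = 0 by rewrite -[y]mulmx1 -(mulmxV HHu) mulmxA Hy mul0mx.
  by rewrite mul0mx sub0mx.
have HP : row_free (col_mx K N).
  by rewrite /row_free -addsmxE mxrank_disjoint_sum // (eqP HKf) (eqP HNf).
exists d, m, K, N, C, D, H; split; split => //.
move=> m0; pose u := row (Ordinal m0) N.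
have Hu0 : u != 0.
  apply/eqP => Hu.
  have H1 : row (Ordinal m0) N = (0 : 'rV_m) *m N by rewrite -/u Hu mul0mx.
  rewrite rowE in H1.
  move/(row_free_inj HNf): H1 => /matrixP /(_ 0 (Ordinal m0)).
  by rewrite !mxE !eqxx /= => /eqP; rewrite oner_eq0.
pose Y2 := krylov u a d.
have HuN : forall k, (u *m a ^+ k <= N)%MS.
  elim=> [|k IH]; first by rewrite expr0 mulmx1 row_sub.
  by rewrite exprSr -mulmxE mulmxA (submx_trans (submxMr a IH) HNs).
have HY2s : (Y2 <= N)%MS by apply/row_subP => i; rewrite rowK.
have HY2a : Y2 *m a = C *m Y2.
  apply/row_matrixP => i; rewrite row_mul rowK row_mul KH.
  have E : horner_mx a ('X ^+ i.+1 - rVpoly (row i C)) = 0.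
    apply/mxminpoly_minP; apply: Hv.
    rewrite rmorphB /= mulmxBr -KH -row_mul -HKC row_mul rowK.
    by rewrite rmorphXn /= horner_mx_X exprSr -mulmxE mulmxA subrr.
  move: E; rewrite rmorphB /= rmorphXn /= horner_mx_X => /eqP; rewrite subr_eq0 => /eqP <-.
  by rewrite exprSr -mulmxE mulmxA.
pose Y := Y2 *m pinvmx N.
exists Y.
  apply/eqP => HY0.
  have : Y2 = 0 by rewrite -(mulmxKpV HY2s) -/Y HY0 mul0mx.
  move/(congr1 (row (Ordinal d0))); rewrite rowK row0 expr0 mulmx1 => Hu.
  by move: Hu0; rewrite Hu eqxx.
apply: (row_free_inj HNf) => /=.
have HYN : Y *m N = Y2 by apply: mulmxKpV.
by rewrite -mulmxA -HND mulmxA HYN HY2a -HYN mulmxA.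
Qed.
End Decomp.

Section Assemble.
Context {F : fieldType}.

Lemma assemble n d m (a : 'M[F]_n) (K : 'M_(d, n)) (N : 'M_(m, n)) C D
  (M : 'M_(d + m)) :
  (d + m = n)%N -> row_free (col_mx K N) -> K *m a = C *m K -> N *m a = D *m N ->
  M \in unitmx -> M *m block_mx C 0 0 D = (block_mx C 0 0 D)^T *m M ->
  [/\ (col_mx K N)^T *m M *m col_mx K N \in unitmx,
      (col_mx K N)^T *m M *m col_mx K N *m a = a^T *m ((col_mx K N)^T *m M *m col_mx K N)
    & ((col_mx K N)^T *m M *m col_mx K N)^T = (col_mx K N)^T *m M *m col_mx K N ->
      M^T = M].
Proof.
move=> Hdm HP HK HN HM HR; set P := col_mx K N.
have HPa : P *m a = block_mx C 0 0 D *m P.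
  by rewrite /P mul_col_mx mul_block_col !mul0mx addr0 add0r HK HN.
split.
- rewrite -row_free_unit /row_free mxrankMfree // -mxrank_tr trmx_mul trmxK.
  by rewrite mxrankMfree // mxrank_tr mxrank_unit // Hdm.
- by rewrite -mulmxA HPa mulmxA -(mulmxA _ M) HR !mulmxA -trmx_mul -HPa trmx_mul.
- move=> E.
  have E1 : P^T *m M^T *m P = P^T *m M *m P.
    by rewrite -[RHS]E !trmx_mul trmxK mulmxA.
  have E2 := row_free_inj HP E1.
  have E3 : M *m P = M^T *m P.
    by apply: trmx_inj; rewrite !trmx_mul trmxK E2.
  exact: (esym (row_free_inj HP E3)).
Qed.

Lemma block_R d m (C : 'M[F]_d) (D : 'M_m) (A : 'M_d) (X : 'M_(d, m)) (Z : 'M_m) :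
  A *m C = C^T *m A -> X *m D = C^T *m X -> Z *m D = D^T *m Z ->
  block_mx A X 0 Z *m block_mx C 0 0 D = (block_mx C 0 0 D)^T *m block_mx A X 0 Z.
Proof.
move=> H1 H2 H3; rewrite tr_block_mx !trmx0 !mulmx_block.
by rewrite !mulmx0 !mul0mx !addr0 !add0r H1 H2 H3.
Qed.

Lemma block_unit d m (A : 'M[F]_d) (X : 'M_(d, m)) (Z : 'M_m) :
  A \in unitmx -> Z \in unitmx -> block_mx A X 0 Z \in unitmx.
Proof. by rewrite !unitmxE det_ublock => HA HZ; rewrite unitrM HA HZ. Qed.

Lemma part1 n (a : 'M[F]_n) :
  exists g, [/\ g \in unitmx, g^T = g & g *m a = a^T *m g].
Proof.
elim: n {-2}n (leqnn n) a => [|k IH] n Hn a.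
  move: a; rewrite leqn0 in Hn; rewrite (eqP Hn) => a.
  by exists 1%:M; split; rewrite ?unitmx1 ?trmx1 //; apply/matrixP => [[]].
case: n Hn a => [|n] Hn a.
  by exists 1%:M; split; rewrite ?unitmx1 ?trmx1 //; apply/matrixP => [[]].
have [d [m [K [N [C [D [H [[Hdm Hd HP HK HN] [HHu HHs HCH _]]]]]]]]] := decomp _ _ a.
have d0 : (0 < d)%N by rewrite Hd mxminpoly_nonconstant.
have [gD [HgDu HgDs HgD]] : exists g, [/\ g \in unitmx, g^T = g & g *m D = D^T *m g].
  by apply: IH; move: Hn Hdm d0; clear; lia.
have HiH : invmx H *m C = C^T *m invmx H.
  by apply: (canRL (mulmxK HHu)); rewrite -mulmxA HCH mulmxA mulVmx // mul1mx.
pose M := block_mx (invmx H) 0 0 gD.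
have HMu : M \in unitmx by apply: block_unit; rewrite ?unitmx_inv.
have H0 : (0 : 'M_(d, m)) *m D = C^T *m 0 by rewrite mul0mx mulmx0.
have HMR := block_R _ _ _ _ _ _ _ HiH H0 HgD.
have [Gu GR _] := assemble _ _ _ _ _ _ _ _ _ Hdm HP HK HN HMu HMR.
exists ((col_mx K N)^T *m M *m col_mx K N); split => //.
by rewrite !trmx_mul trmxK /M tr_block_mx !trmx0 trmx_inv HHs HgDs mulmxA.
Qed.


Lemma part3 n (a : 'M[F]_n.+1) : mxminpoly a != char_poly a ->
  exists g, [/\ g \in unitmx, g *m a = a^T *m g & g^T != g].
Proof.
move=> Hne.
have [d [m [K [N [C [D [H [[Hdm Hd HP HK HN] [HHu HHs HCH HY]]]]]]]]] := decomp _ _ a.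
have m0 : (0 < m)%N.
  rewrite lt0n; apply/negP => /eqP m0; move: Hne; rewrite m0 addn0 in Hdm.
  have Hs : size (mxminpoly a) = size (char_poly a).
    by rewrite size_mxminpoly size_char_poly -Hd Hdm.
  have Hdv := mxminpoly_dvd_char a.
  have Heq : mxminpoly a %= char_poly a by rewrite -dvdp_size_eqp // Hs.
  by rewrite -eqp_monic ?mxminpoly_monic ?char_poly_monic // Heq.
have [Y HY0 HYD] := HY m0.
have [gD [HgDu HgDs HgD]] := part1 _ D.
have HiH : invmx H *m C = C^T *m invmx H.
  by apply: (canRL (mulmxK HHu)); rewrite -mulmxA HCH mulmxA mulVmx // mul1mx.
have HX : invmx H *m Y *m D = C^T *m (invmx H *m Y).
  by rewrite -mulmxA HYD !mulmxA HiH.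
pose M := block_mx (invmx H) (invmx H *m Y) 0 gD.
have HMu : M \in unitmx by apply: block_unit; rewrite ?unitmx_inv.
have HMR := block_R _ _ _ _ _ _ _ HiH HX HgD.
have [Gu GR Gs] := assemble _ _ _ _ _ _ _ _ _ Hdm HP HK HN HMu HMR.
exists ((col_mx K N)^T *m M *m col_mx K N); split => //.
apply/negP => /eqP /Gs; rewrite /M tr_block_mx => /eq_block_mx [_ _ E _].
have : Y = H *m (invmx H *m Y) by rewrite mulmxA mulmxV // mul1mx.
move/eqP: E; rewrite trmx_eq0 => /eqP ->; rewrite mulmx0 => HY'.
by move: HY0; rewrite HY' eqxx.
Qed.

End Assemble.

Theorem mainTheorem3 (F : fieldType) (n : nat) (a : 'M[F]_n.+1) :
  [/\ (exists g : 'M[F]_n.+1,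
         [/\ g \in unitmx, g *m a *m invmx g = a^T & g^T = g]),
      (mxminpoly a = char_poly a ->
         forall g : 'M[F]_n.+1, g \in unitmx -> g *m a *m invmx g = a^T -> g^T = g)
    & (mxminpoly a != char_poly a ->
         exists g : 'M[F]_n.+1,
           [/\ g \in unitmx, g *m a *m invmx g = a^T & g^T != g])].
Proof.
split.
- have [g [Hu Hs Hg]] := part1 _ a.
  by exists g; split => //; rewrite Hg mulmxK.
- move=> Hmc g Hu Hg; apply: (part2 _ _ Hmc g).
  by rewrite -Hg mulmxKV.
- move=> Hne; have [g [Hu Hg Hs]] := part3 _ _ Hne.
  by exists g; split => //; rewrite Hg mulmxK.
Qed.
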